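(* Let $p\ge0$ be an integer, $n=2p+1$ and $R>0$. Let $D$ be the determinant of the $(p+2)\times(p+2)$ matrix whose rows indexed by $i=0,\dots,p$ are $\bigl(\chi_{p+i},\ \delta\chi_{p+i},\ \delta^2\chi_{p+i},\ \dots,\ \delta^p\chi_{p+i},\ 0\bigr)$ and whose last row is $\bigl(-nR^{n-1},0,\dots,0,n!\bigr)$, all functions evaluated at $R$. Then \[D=n!\,R^{(p+1)p/2}\det[\chi_{i+j}(R)]_{i,j=0}^p.\]
   Context: The reverse Bessel polynomials are $\chi_0=1$, $\chi_1=R$, $\chi_{i+2}=R^2\chi_i+(2i+1)\chi_{i+1}$. The operator $\delta$ on functions of $R>0$ is $\delta f(R)=e^{R}R^{2p}\frac{\mathrm d}{\mathrm dR}\bigl(e^{-R}R^{-2p}f(R)\bigr)$, and $\delta^j$ is its $j$-fold iterate. *)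

(* Defs.v *)
From Stdlib Require Import Reals.
From Coquelicot Require Import Coquelicot.
From mathcomp Require Import all_boot all_order all_algebra.
From mathcomp Require Import Rstruct.

Set Implicit Arguments.
Unset Strict Implicit.
Unset Printing Implicit Defensive.

Local Open Scope R_scope.

(* Reverse Bessel polynomials as functions of R:
   chi_0 = 1, chi_1 = R, chi_{i+2} = R^2 chi_i + (2i+1) chi_{i+1}. *)
Fixpoint chi_pair (i : nat) (x : R) : R * R :=
  match i with
  | O => (1, x)
  | S k => let (a, b) := chi_pair k x in
           (b, x ^ 2 * a + INR (2 * k + 1) * b)
  end.

Definition chi (i : nat) (x : R) : R := fst (chi_pair i x).

Definition delta (p : nat) (f : R -> R) : R -> R :=
  fun x => exp x * x ^ (2 * p) *
           Derive (fun y => exp (- y) * / (y ^ (2 * p)) * f y) x.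

Definition delta_iter (p j : nat) (f : R -> R) : R -> R :=
  Nat.iter j (delta p) f.

Definition lemma5p2_entry (p : nat) (x : R) (i j : nat) : R :=
  let n := (2 * p + 1)%nat in
  if (i <=? p)%nat then
    (if (j <=? p)%nat then delta_iter p j (chi (p + i)) x else 0)
  else
    (if (j =? 0)%nat then - (INR n * x ^ (n - 1))
     else if (j =? p + 1)%nat then INR (n`!) else 0).

Definition lemma5p2_matrix (p : nat) (x : R) : 'M[R]_(p.+2) :=
  \matrix_(i < p.+2, j < p.+2) lemma5p2_entry p x i j.

Definition hankel_chi (p : nat) (x : R) : 'M[R]_(p.+1) :=
  \matrix_(i < p.+1, j < p.+1) chi (i + j) x.

(* Main.v *)
Require Import Defs.
From Stdlib Require Import Reals Lra Lia.
From Coquelicot Require Import Coquelicot.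
From mathcomp Require Import all_boot all_order all_algebra.
From mathcomp Require Import Rstruct zify.

Module Part1.
Local Open Scope R_scope.


Lemma chi0 y : chi 0 y = 1. Proof. reflexivity. Qed.
Lemma chi1 y : chi 1 y = y. Proof. reflexivity. Qed.
Lemma chi_SS k y : chi (S (S k)) y = y ^ 2 * chi k y + INR (2 * k + 1) * chi (S k) y.
Proof. unfold chi; simpl. destruct (chi_pair k y) as [a b]; simpl. reflexivity. Qed.

Lemma der_mult (f g : R -> R) x df dg : is_derive f x df -> is_derive g x dg ->
  is_derive (fun t => f t * g t) x (df * g x + f x * dg).
Proof. intros; apply (is_derive_mult f g); auto. intros; apply Rmult_comm. Qed.
Lemma der_plus (f g : R -> R) x df dg : is_derive f x df -> is_derive g x dg ->
  is_derive (fun t => f t + g t) x (df + dg).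
Proof. intros; apply (is_derive_plus f g); auto. Qed.
Lemma der_const (c x : R) : is_derive (fun _ => c) x 0.
Proof. apply (is_derive_const c x). Qed.
Lemma der_id (x : R) : is_derive (fun t => t) x 1.
Proof. apply (is_derive_id x). Qed.
Lemma der_sq (x : R) : is_derive (fun t => t ^ 2) x (2 * x).
Proof. auto_derive; auto. ring. Qed.
Lemma der_eq (f : R -> R) x d d' : d = d' -> is_derive f x d -> is_derive f x d'.
Proof. intros ->; auto. Qed.

Definition Dchi (m : nat) (y : R) := chi m y + chi m y / y - y * chi (m - 1) y.

Lemma chi_derive2 m y : y <> 0 ->
  is_derive (chi (S m)) y (Dchi (S m) y) /\ is_derive (chi (S (S m))) y (Dchi (S (S m)) y).
Proof.
  intro Hy. induction m as [|m [IH1 IH2]].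
  - split.
    + apply is_derive_ext with (f := fun z => z). intro t; rewrite chi1; auto.
      replace (Dchi 1 y) with 1. apply (is_derive_id y).
      unfold Dchi; simpl. rewrite chi1 chi0. field. auto.
    + apply is_derive_ext with (f := fun z => z ^ 2 * 1 + INR 1 * z).
      intro t. rewrite chi_SS chi0 chi1. reflexivity.
      unfold Dchi. replace (S (S 0) - 1)%nat with 1%nat by reflexivity. rewrite chi_SS chi0 chi1.
      auto_derive; auto. simpl. field. auto.
  - split; auto.
    apply is_derive_ext with (f := fun z => z ^ 2 * chi (S m) z + INR (2 * S m + 1) * chi (S (S m)) z).
    intro t; rewrite (chi_SS (S m) t); reflexivity.
    eapply der_eq; [| apply der_plus; [apply der_mult; [apply der_sq | apply IH1] |
       apply der_mult; [apply der_const | apply IH2]]].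
    unfold Dchi. replace (S (S (S m)) - 1)%nat with (S (S m)) by lia.
      replace (S (S m) - 1)%nat with (S m) by lia.
      replace (S m - 1)%nat with m by lia.
      destruct m as [|m'].
      * rewrite (chi_SS (S 0)) chi_SS. simpl. rewrite chi0 chi1. field. auto.
      * assert (E1 := chi_SS m' y); assert (E2 := chi_SS (S m') y); assert (E3 := chi_SS (S (S m')) y).
        rewrite -?multE -?plusE in E1 E2 E3 *; rewrite ?plus_INR ?mult_INR ?S_INR in E1 E2 E3 *. simpl in *.
        revert E1 E2 E3.
        generalize (chi m' y) (chi (S m') y) (chi (S (S m')) y) (chi (S (S (S m'))) y) (chi (S (S (S (S m')))) y).
        intros a b c d e E1 E2 E3. rewrite E3 E2 E1. field. auto.
Qed.

Lemma der_invpow (p : nat) y : 0 < y ->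
  is_derive (fun z => / z ^ (2 * p)) y (- INR (2 * p) / y * / y ^ (2 * p)).
Proof.
  intro Hy. destruct p as [|p].
  - replace (- INR (2*0) / y * / y^(2*0)) with 0 by (simpl; field; lra). simpl. apply der_const.
  - replace (2 * S p)%nat with (S (2 * p + 1)) by lia.
    assert (y ^ (2 * p + 1) <> 0) by (apply pow_nonzero; lra).
    generalize (2 * p + 1)%nat H. intros n Hn.
    auto_derive. apply Rmult_integral_contrapositive_currified; auto; lra.
    change (match n with 0%nat => 1 | S _ => INR n + 1 end) with (INR (S n)).
    simpl. field. split; auto; lra.
Qed.

Lemma delta_formula (p : nat) (G : R -> R) y g' : 0 < y -> is_derive G y g' ->
  delta p G y = g' - (1 + INR (2 * p) / y) * G y.
Proof.
  intros Hy HG. unfold delta.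
  assert (Hp : y ^ (2 * p) <> 0) by (apply pow_nonzero; lra).
  assert (He : is_derive (fun z => exp (- z)) y (- exp (- y))).
  { auto_derive; auto. ring. }
  assert (H : is_derive (fun z => exp (- z) * / z ^ (2 * p) * G z) y
     ((- exp (- y) * / y ^ (2 * p) + exp (- y) * (- INR (2 * p) / y * / y ^ (2 * p))) * G y
      + exp (- y) * / y ^ (2 * p) * g'))
   by exact (der_mult _ _ _ _ _ (der_mult _ _ _ _ _ He (der_invpow p y Hy)) HG).
  match type of H with is_derive _ _ ?v =>
    assert (E : Derive (fun z => exp (- z) * / z ^ (2 * p) * G z) y = v)
      by (apply is_derive_unique; exact H) end.
  rewrite E.
  rewrite exp_Ropp. assert (exp y <> 0) by (apply Rgt_not_eq, exp_pos).
  field. split; auto; lra.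
Qed.

Lemma loc_pos y : 0 < y -> locally y (fun z : R => 0 < z).
Proof. intro Hy. exact (open_gt 0 y Hy). Qed.

Inductive expr := EC (c : R) | EX | EI | EP (a b : expr) | EM (a b : expr).
Fixpoint ev (e : expr) (y : R) : R :=
  match e with EC c => c | EX => y | EI => / y
  | EP a b => ev a y + ev b y | EM a b => ev a y * ev b y end.
Fixpoint dex (e : expr) : expr :=
  match e with EC _ => EC 0 | EX => EC 1 | EI => EM (EC (-1)) (EM EI EI)
  | EP a b => EP (dex a) (dex b) | EM a b => EP (EM (dex a) b) (EM a (dex b)) end.

Lemma dex_ok e y : 0 < y -> is_derive (ev e) y (ev (dex e) y).
Proof.
  intro Hy. induction e as [c| | |a IHa b IHb|a IHa b IHb]; simpl.
  - apply der_const.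
  - apply der_id.
  - auto_derive. lra. field. lra.
  - apply der_plus; auto.
  - apply der_mult; auto.
Qed.

Lemma zero_deriv e y : 0 < y -> (forall z, 0 < z -> ev e z = 0) -> ev (dex e) y = 0.
Proof.
  intros Hy Hz.
  assert (H1 := dex_ok e y Hy).
  assert (H2 : is_derive (ev e) y 0).
  { apply is_derive_ext_loc with (f := fun _ => 0).
    - apply filter_imp with (2 := loc_pos y Hy). intros z Hz'. symmetry; auto.
    - apply der_const. }
  rewrite <- (is_derive_unique _ _ _ H1). apply is_derive_unique; auto.
Qed.

Definition a_p (p : nat) : R := 1 - INR (2 * p).

Fixpoint coef (p j l : nat) : expr :=
  match j with
  | O => match l with O => EC 1 | S _ => EC 0 end
  | S j' => EP (EP (dex (coef p j' l)) (EM (EC (a_p p)) (EM EI (coef p j' l))))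
              (match l with O => EC 0 | S l' => EM (EC (-1)) (EM EX (coef p j' l')) end)
  end.

Lemma coef_zero p j : forall l, (j < l)%nat -> forall z, 0 < z -> ev (coef p j l) z = 0.
Proof.
  induction j as [|j IH]; intros l Hl z Hz.
  - destruct l; [lia | reflexivity].
  - simpl. rewrite (zero_deriv _ z Hz). 2: { intros; apply IH; auto; lia. }
    rewrite (IH l); [|lia|auto].
    destruct l as [|l']; [lia|]. simpl. rewrite (IH l'); [ring|lia|auto].
Qed.

Lemma coef_diag p j z : 0 < z -> ev (coef p j j) z = (- z) ^ j.
Proof.
  intro Hz. induction j as [|j IH].
  - reflexivity.
  - simpl. rewrite (zero_deriv _ z Hz). 2: { intros; apply coef_zero; auto; lia. }
    rewrite (coef_zero p j (S j)); [|lia|auto]. rewrite IH. ring.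
Qed.

Fixpoint sumR (n : nat) (F : nat -> R) : R :=
  match n with O => 0 | S n' => sumR n' F + F n' end.

Lemma sumR_ext n F G : (forall l, (l < n)%nat -> F l = G l) -> sumR n F = sumR n G.
Proof.
  induction n as [|n IH]; intros H; simpl; auto.
  rewrite IH. rewrite H; auto. intros; apply H; lia.
Qed.
Lemma sumR_plus n F G : sumR n (fun l => F l + G l) = sumR n F + sumR n G.
Proof. induction n as [|n IH]; simpl; [ring|rewrite IH; ring]. Qed.
Lemma sumR_scal n c F : sumR n (fun l => c * F l) = c * sumR n F.
Proof. induction n as [|n IH]; simpl; [ring|rewrite IH; ring]. Qed.
Lemma sumR_shift n F : sumR (S n) F = F O + sumR n (fun l => F (S l)).
Proof. induction n as [|n IH]; simpl in *; [ring|rewrite IH; ring]. Qed.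

Lemma sumR_lin n F G c : sumR n F - c * sumR n G = sumR n (fun l => F l - c * G l).
Proof. induction n as [|n IH]; simpl; [ring|rewrite <- IH; ring]. Qed.

Lemma der_sum n (F : nat -> R -> R) (F' : nat -> R) y :
  (forall l, (l < n)%nat -> is_derive (F l) y (F' l)) ->
  is_derive (fun z => sumR n (fun l => F l z)) y (sumR n F').
Proof.
  induction n as [|n IH]; intro H; simpl.
  - apply der_const.
  - apply der_plus. apply IH. intros; apply H; lia. apply H; lia.
Qed.

Lemma chi_der m y : (1 <= m)%nat -> 0 < y -> is_derive (chi m) y (Dchi m y).
Proof.
  intros Hm Hy. destruct m as [|m]; [lia|]. apply (chi_derive2 m y). lra.
Qed.

Lemma main_expansion p j : forall k, (j <= k)%nat -> forall y, 0 < y ->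
  delta_iter p j (chi k) y = sumR (S j) (fun l => ev (coef p j l) y * chi (k - l) y).
Proof.
  induction j as [|j IH]; intros k Hk y Hy.
  - simpl. rewrite subn0. ring.
  - change (delta_iter p (S j) (chi k) y) with (delta p (delta_iter p j (chi k)) y).
    set (G := fun z => sumR (S j) (fun l => ev (coef p j l) z * chi (k - l) z)).
    assert (E : delta p (delta_iter p j (chi k)) y = delta p G y).
    { unfold delta. f_equal. apply Derive_ext_loc.
      apply filter_imp with (2 := loc_pos y Hy). intros z Hz.
      rewrite (IH k); [reflexivity|lia|auto]. }
    rewrite E.
    assert (HG : is_derive G y (sumR (S j) (fun l =>
        ev (dex (coef p j l)) y * chi (k - l) y + ev (coef p j l) y * Dchi (k - l) y))).
    { unfold G. apply (der_sum (S j) (fun l z => ev (coef p j l) z * chi (k - l) z)).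
      intros l Hl. apply der_mult. apply dex_ok; auto. apply chi_der; auto. lia. }
    rewrite (delta_formula p G y _ Hy HG). unfold G.
    set (c := fun l => ev (coef p j l) y).
    set (c' := fun l => ev (dex (coef p j l)) y).
    transitivity (sumR (S j) (fun l => (c' l + a_p p * (/ y * c l)) * chi (k - l) y
                     + (-1 * (y * c l)) * chi (k - S l) y)).
    + rewrite sumR_lin. apply sumR_ext. intros l Hl. unfold Dchi.
      replace (k - l - 1)%nat with (k - S l)%nat by lia. unfold c, c', a_p. field. lra.
    + transitivity (sumR (S (S j)) (fun l =>
          (c' l + a_p p * (/ y * c l)) * chi (k - l) y +
          ev (match l with O => EC 0 | S l' => EM (EC (-1)) (EM EX (coef p j l')) end) y * chi (k - l) y)).
      * symmetry. rewrite sumR_plus.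
        change (sumR (S (S j)) ?F + ?G = ?H) with (sumR (S j) F + F (S j) + G = H).
        rewrite (sumR_shift (S j)). rewrite sumR_plus.
        unfold c, c'. rewrite (zero_deriv _ y Hy). 2: { intros; apply coef_zero; auto. }
        rewrite (coef_zero p j (S j)); auto. simpl. ring.
      * apply sumR_ext. intros l Hl. unfold c, c'. simpl. ring.
Qed.

End Part1.
Import Part1.

Import GRing.Theory.
Local Open Scope ring_scope.


Fixpoint tri (n : nat) : nat := match n with O => O | S n' => (tri n' + n'.+1)%N end.

Lemma tri_div n : tri n = ((n + 1) * n %/ 2)%N.
Proof.
  have H : forall n, (2 * tri n = (n + 1) * n)%N.
  { elim=> [|m IH] //=. rewrite mulnDr IH. lia. }
  by rewrite -(H n) mulKn.
Qed.

Lemma antitri (x : R) n (W : 'M[R]_n.+1) :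
  (forall i j : 'I_n.+1, (i + j < n)%N -> W i j = 0) ->
  (forall i : 'I_n.+1, W i (rev_ord i) = (- x) ^+ (n - i)) ->
  \det W = x ^+ tri n.
Proof.
  elim: n W => [|n IH] W H0 Hd.
  - rewrite det_mx11. have := Hd ord0.
    have -> : rev_ord (@ord0 0) = 0 by apply: val_inj.
    have -> : (@ord0 0) = 0 by apply: val_inj.
    by move=> ->; rewrite /= expr0.
  - rewrite (expand_det_row _ ord0) big_ord_recr /= big1 ?add0r; last first.
      by move=> j _; rewrite H0 ?mul0r //= add0n.
    have -> : (ord_max : 'I_n.+2) = rev_ord ord0 by apply: val_inj => /=; lia.
    rewrite Hd /cofactor IH.
    + have -> : (rev_ord (@ord0 n.+1) : nat) = n.+1 by rewrite /=; lia.
      rewrite /= subn0 add0n mulrA -exprMn mulrN1 opprK -exprD addnC //.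
    + move=> i j Hij; rewrite !mxE H0 //= /bump /=; have := ltn_ord j; lia.
    + move=> i; rewrite !mxE.
      have -> : lift (rev_ord ord0) (rev_ord i) = rev_ord (lift ord0 i).
        by apply: val_inj; have := ltn_ord i; rewrite /= /bump /=; lia.
      by rewrite Hd lift0 subSS.
Qed.

Lemma sumR_big N (F : nat -> R) : sumR N F = \sum_(l < N) F l.
Proof. elim: N => [|N IH]; first by rewrite big_ord0. by rewrite big_ord_recr /= -IH. Qed.

Lemma sumR_pad n N (F : nat -> R) : (n <= N)%N -> (forall l, (n <= l < N)%N -> F l = 0) ->
  sumR n F = sumR N F.
Proof.
  elim: N => [|N IH] Hn HF.
  - by have -> : n = 0%N by lia.
  - case: (leqP n N) => H.
    + rewrite /= -IH //.
      * rewrite HF ?Rplus_0_r //. lia.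
      * by move=> l Hl; apply: HF; lia.
    + by have -> : n = N.+1 by lia.
Qed.

Definition Amat p x : 'M[R]_(p.+1) := \matrix_(i < p.+1, j < p.+1) delta_iter p j (chi (p + i)) x.
Definition Vmat p x : 'M[R]_(p.+1) := \matrix_(m < p.+1, j < p.+1) ev (coef p j (p - m)) x.

Lemma A_eq p (x : R) (hx : (0 < x)%R) (i j : 'I_p.+1) :
  delta_iter p j (chi (p + i)) x = \sum_(m < p.+1) chi (i + m) x * ev (coef p j (p - m)) x.
Proof.
  have hx' : Rlt 0 x by apply/RltP.
  rewrite (main_expansion p j (p + i)) //; last by have := ltn_ord j; lia.
  rewrite (sumR_pad (S j) (S p)); last first.
    - move=> l Hl. rewrite (coef_zero p j l) //; last by lia. by rewrite Rmult_0_l.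
    - by have := ltn_ord j; lia.
  rewrite sumR_big (reindex_inj rev_ord_inj) /=.
  apply: eq_bigr => m _. rewrite mulrC. have := ltn_ord m => Hm.
  have -> : (p.+1 - m.+1 = p - m)%N by lia.
  by have -> : (p + i - (p - m) = i + m)%N by lia.
Qed.

Lemma detV p (x : R) (hx : (0 < x)%R) : \det (Vmat p x) = x ^+ tri p.
Proof.
  have hx' : Rlt 0 x by apply/RltP.
  apply: antitri.
  - move=> i j Hij. rewrite mxE coef_zero //. have := ltn_ord i; lia.
  - move=> i. rewrite mxE.
    have -> : (p - i = rev_ord i)%N by rewrite /=; have := ltn_ord i; lia.
    by rewrite coef_diag // RpowE.
Qed.

Lemma AHV p x (hx : (0 < x)%R) : Amat p x = hankel_chi p x *m Vmat p x.
Proof.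
  apply/matrixP => i j. rewrite !mxE A_eq //. apply: eq_bigr => m _. by rewrite !mxE.
Qed.

Lemma detM p x : \det (lemma5p2_matrix p x) = ((2 * p + 1)`!)%:R * \det (Amat p x).
Proof.
  rewrite (expand_det_col _ ord_max) big_ord_recr /= big1 ?add0r; last first.
    move=> i _. rewrite mxE /lemma5p2_entry.
    have -> : (widen_ord (leqnSn p.+1) i <=? p)%nat = true by apply Nat.leb_le; rewrite /=; have := ltn_ord i; lia.
    have -> : (@ord_max p.+1 <=? p)%nat = false by apply Nat.leb_gt; rewrite /=; lia.
    by rewrite mul0r.
  rewrite mxE /lemma5p2_entry.
  have -> : (@ord_max p.+1 <=? p)%nat = false by apply Nat.leb_gt; rewrite /=; lia.
  have -> : (@ord_max p.+1 =? 0)%nat = false by apply Nat.eqb_neq; rewrite /=; lia.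
  have -> : (@ord_max p.+1 =? p + 1)%nat = true by apply Nat.eqb_eq; rewrite /=; lia.
  rewrite INRE /cofactor addnn -signr_odd odd_double expr0 mul1r.
  congr (_ * \det _).
  apply/matrixP => i j. rewrite !mxE /lemma5p2_entry.
  have Hi : (i < p.+1)%N := ltn_ord i; have Hj : (j < p.+1)%N := ltn_ord j.
  have -> : (lift (@ord_max p.+1) i <=? p)%nat = true by apply Nat.leb_le; rewrite lift_max; apply/leP; exact Hi.
  have -> : (lift (@ord_max p.+1) j <=? p)%nat = true by apply Nat.leb_le; rewrite lift_max; apply/leP; exact Hj.
  by rewrite !lift_max.
Qed.

Theorem lemma5p2 (p : nat) (x : R) (hx : 0 < x) :
  \det (lemma5p2_matrix p x) =
  (2 * p + 1)`!%:R * x ^+ (((p + 1) * p) %/ 2)%N * \det (hankel_chi p x).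
Proof.
  rewrite detM AHV // det_mulmx detV // -tri_div.
  by rewrite -mulrA [\det _ * _]mulrC.
Qed.
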